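(* Let $d,n\ge1$ and $x_0,x_1,\dots,x_n\in\mathbb{R}^d$. Let $M^*$ be the solution (minimizer) of $$\min_M \tfrac12\|M\|^2 \quad\text{subject to}\quad (x_i-x_0)^T M (x_i-x_0)\ge 2\ \ \forall i\in\{1,\dots,n\},$$ where $M$ ranges over real $d\times d$ matrices. Then $M^*$ is also the solution of $$\min_M \tfrac12\|M\|^2 \quad\text{subject to}\quad (x_i-x_0)^T M (x_i-x_0)\ge 2\ \ \forall i\in\{1,\dots,n\},\quad M\succeq 0.$$
   Context: $\|M\|$ is the Frobenius norm, $\|M\|^2=\sum_{ij}M_{ij}^2$. $M\succeq 0$ means $M$ is a symmetric positive semidefinite matrix. *)

(* Defs.v *)
From HB Require Import structures.
From mathcomp Require Import all_boot all_order all_algebra.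
From mathcomp Require Import reals.
Set Implicit Arguments. Unset Strict Implicit. Unset Printing Implicit Defensive.
Import Order.TTheory GRing.Theory Num.Theory.
Local Open Scope ring_scope.

Definition frob2 (R : realType) (d : nat) (M : 'M[R]_d) : R :=
  \sum_(i < d) \sum_(j < d) M i j ^+ 2.

Definition obj (R : realType) (d : nat) (M : 'M[R]_d) : R := frob2 M / 2.

Definition qform (R : realType) (d : nat) (M : 'M[R]_d) (v : 'cV[R]_d) : R :=
  (v^T *m M *m v) 0 0.

Definition psd (R : realType) (d : nat) (M : 'M[R]_d) : Prop :=
  M^T = M /\ forall v : 'cV[R]_d, 0 <= qform M v.

Definition feas1 (R : realType) (d n : nat) (x0 : 'cV[R]_d) (x : 'I_n -> 'cV[R]_d)
  (M : 'M[R]_d) : Prop :=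
  forall i : 'I_n, 2 <= qform M (x i - x0).

Definition feas2 (R : realType) (d n : nat) (x0 : 'cV[R]_d) (x : 'I_n -> 'cV[R]_d)
  (M : 'M[R]_d) : Prop :=
  feas1 x0 x M /\ psd M.

Definition is_minimizer (R : realType) (d : nat) (F : 'M[R]_d -> Prop) (M : 'M[R]_d) : Prop :=
  F M /\ forall N : 'M[R]_d, F N -> obj M <= obj N.

(* Main.v *)
Require Import Defs.
From HB Require Import structures.
From mathcomp Require Import all_boot all_order all_algebra.
From mathcomp Require Import reals.
From mathcomp Require Import ring lra.
Set Implicit Arguments. Unset Strict Implicit.
Import Order.TTheory GRing.Theory Num.Theory.
Local Open Scope ring_scope.

Definition ip (R : realType) (d : nat) (M A : 'M[R]_d) : R :=
  \sum_(i < d) \sum_(j < d) M i j * A i j.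

Lemma frob2_ge0 (R : realType) d (M : 'M[R]_d) : 0 <= frob2 M.
Proof. apply: sumr_ge0 => i _; apply: sumr_ge0 => j _; exact: sqr_ge0. Qed.

Lemma frob2_lin (R : realType) d (M A : 'M[R]_d) t :
  frob2 (M + t *: A) = frob2 M + 2 * t * ip M A + t ^+ 2 * frob2 A.
Proof.
rewrite /frob2 /ip !mulr_sumr -!big_split /=; apply: eq_bigr => i _.
rewrite !mulr_sumr -!big_split /=; apply: eq_bigr => j _.
rewrite !mxE; ring.
Qed.

Lemma qform_lin (R : realType) d (M A : 'M[R]_d) t v :
  qform (M + t *: A) v = qform M v + t * qform A v.
Proof.
rewrite /qform mulmxDr mulmxDl -scalemxAr -scalemxAl !mxE; done.
Qed.

Lemma key (R : realType) (a b F : R) : 0 <= F ->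
  (forall t, 0 < t -> a <= a + 2 * t * b + t ^+ 2 * F) -> 0 <= b.
Proof.
move=> F0 H; rewrite leNgt; apply/negP => b0.
have tp : 0 < - b / (F + 1) by rewrite divr_gt0 // ?oppr_gt0 //; lra.
have := H _ tp.
set t := - b / (F + 1).
have e : t * (F + 1) = - b by rewrite /t divfK //; apply/lt0r_neq0; lra.
nra.
Qed.

Lemma minimizer_ip (R : realType) (d n : nat) (x0 : 'cV[R]_d) (x : 'I_n -> 'cV[R]_d)
  (M A : 'M[R]_d) : is_minimizer (feas1 x0 x) M ->
  (forall v, 0 <= qform A v) -> 0 <= ip M A.
Proof.
move=> [fM mM] hA.
apply: (@key _ (frob2 M) _ (frob2 A) (frob2_ge0 A)) => t t0.
rewrite -frob2_lin.
have : obj M <= obj (M + t *: A).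
  apply: mM => i; rewrite qform_lin.
  have := fM i; have := hA (x i - x0); nra.
rewrite /obj; lra.
Qed.

Lemma qform_vvT (R : realType) d (v w : 'cV[R]_d) :
  qform (v *m v^T) w = ((w^T *m v) 0 0) ^+ 2.
Proof.
rewrite /qform !mulmxA -(mulmxA _ v^T) mxE big_ord1.
have -> : (v^T *m w) 0 0 = (w^T *m v) 0 0.
  by rewrite !mxE; apply: eq_bigr => k _; rewrite !mxE mulrC.
by rewrite expr2.
Qed.

Lemma ip_vvT (R : realType) d (M : 'M[R]_d) (v : 'cV[R]_d) :
  ip M (v *m v^T) = qform M v.
Proof.
rewrite /ip /qform mxE.
under [RHS]eq_bigr => j _ do rewrite mxE mulr_suml.
rewrite exchange_big; apply: eq_bigr => i _; apply: eq_bigr => j _.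
by rewrite !mxE big_ord1 !mxE; ring.
Qed.

Lemma qform_tr (R : realType) d (M : 'M[R]_d) w : qform M^T w = qform M w.
Proof.
rewrite /qform.
have -> : w^T *m M^T *m w = (w^T *m M *m w)^T by rewrite !trmx_mul trmxK mulmxA.
by rewrite mxE.
Qed.

Theorem theorem2 (R : realType) (d n : nat) (hd : (1 <= d)%N) (hn : (1 <= n)%N)
  (x0 : 'cV[R]_d) (x : 'I_n -> 'cV[R]_d) (Mstar : 'M[R]_d) :
  is_minimizer (feas1 x0 x) Mstar ->
  is_minimizer (feas2 x0 x) Mstar.
Proof.
move=> hm; have [f1 m1] := hm.
split; last by move=> N [] fN _; exact: m1.
split=> //; split; last first.
  move=> v; rewrite -ip_vvT; apply: (minimizer_ip hm) => w.
  rewrite qform_vvT; exact: sqr_ge0.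
have h := minimizer_ip hm (A := Mstar^T - Mstar).
have {h} : 0 <= ip Mstar (Mstar^T - Mstar).
  apply: h => w.
  have e (A B : 'M[R]_(1,1)) : (A - B) 0 0 = A 0 0 - B 0 0 by rewrite !mxE.
  rewrite /qform mulmxBr mulmxBl e -/(qform _ _) -/(qform _ _) qform_tr subrr //.
have -> : ip Mstar (Mstar^T - Mstar) =
   - (\sum_(i < d) \sum_(j < d) (Mstar i j - Mstar j i) ^+ 2) / 2.
  rewrite /ip.
  have E1 : \sum_(i < d) \sum_(j < d) Mstar i j * (Mstar^T - Mstar) i j =
     \sum_(i < d) \sum_(j < d) Mstar i j * Mstar j i -
     \sum_(i < d) \sum_(j < d) Mstar i j ^+ 2.
    rewrite -sumrB; apply: eq_bigr => i _; rewrite -sumrB; apply: eq_bigr => j _.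
    by rewrite !mxE; ring.
  have E2 : \sum_(i < d) \sum_(j < d) (Mstar i j - Mstar j i) ^+ 2 =
     \sum_(i < d) \sum_(j < d) Mstar i j ^+ 2
     - 2 * \sum_(i < d) \sum_(j < d) Mstar i j * Mstar j i
     + \sum_(i < d) \sum_(j < d) Mstar j i ^+ 2.
    rewrite mulr_sumr -sumrB -big_split /=; apply: eq_bigr => i _.
    rewrite mulr_sumr -sumrB -big_split /=; apply: eq_bigr => j _; ring.
  have E3 : \sum_(i < d) \sum_(j < d) Mstar j i ^+ 2 =
     \sum_(i < d) \sum_(j < d) Mstar i j ^+ 2 by rewrite exchange_big.
  rewrite E1 E2 E3; by field; lra.
have S0 : 0 <= \sum_(i < d) \sum_(j < d) (Mstar i j - Mstar j i) ^+ 2.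
  by apply: sumr_ge0 => i _; apply: sumr_ge0 => j _; exact: sqr_ge0.
move=> h.
have S1 : \sum_(i < d) \sum_(j < d) (Mstar i j - Mstar j i) ^+ 2 = 0 by lra.
apply/matrixP => i j; rewrite mxE.
have Hi : \sum_(j < d) (Mstar i j - Mstar j i) ^+ 2 = 0.
  move/psumr_eq0P: S1; apply=> // k _; apply: sumr_ge0 => l _; exact: sqr_ge0.
have Hj : (Mstar i j - Mstar j i) ^+ 2 = 0.
  move/psumr_eq0P: Hi; apply=> // k _; exact: sqr_ge0.
move: Hj => /eqP; rewrite sqrf_eq0 subr_eq0 => /eqP ->; done.
Qed.
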